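(* Let $(X_t)_{t\ge0}$ be the Ornstein--Uhlenbeck process $dX_t=-X_t\,dt+\sqrt2\,dB_t$ started from a norm-subgaussian random vector $X_0=X$ in $\mathbb{R}^d$. If $T_1\ge\log\frac{\|X\|_{\psi_2}}{\sqrt d}$, then $\|X_{T_1}\|_{\psi_2}\le3\sqrt d$.
   Context: For an $\mathbb{R}^d$-valued random variable $X$, $\|X\|_{\psi_2}:=\inf\{t>0:\mathbb{E}[e^{\|X\|^2/t^2}]\le2\}$ ($\|\cdot\|$ Euclidean norm); $X$ is norm-subgaussian if this is finite. *)

(* Defs.v *)
From HB Require Import structures.
From mathcomp Require Import all_boot all_order all_algebra.
From mathcomp Require Import all_classical all_reals all_analysis.
From mathcomp Require Import normal_distribution.
Set Implicit Arguments. Unset Strict Implicit. Unset Printing Implicit Defensive.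
Import Order.TTheory GRing.Theory Num.Theory.
Local Open Scope classical_set_scope.
Local Open Scope ring_scope.

Definition sqnorm {R : realType} (n : nat) (x : 'I_n -> R) : R :=
  \sum_(i < n) x i ^+ 2.

(* ||Y||_{psi_2} = inf { t > 0 : E[exp(||Y||^2 / t^2)] <= 2 }, in \bar R
   (+oo when the set is empty). A random vector Y in R^n is given by its
   coordinate random variables Y i : T -> R. *)
Definition psi2 {d} {T : measurableType d} {R : realType}
  (P : probability T R) (n : nat) (Y : 'I_n -> T -> R) : \bar R :=
  ereal_inf [set t%:E | t in [set t : R | 0 < t /\
     (\int[P]_w (expR (sqnorm (fun i => Y i w) / t ^+ 2))%:E <= 2%:E)%E]].

(* Z = (Z_1..Z_n) is a standard Gaussian vector N(0, I_n) independent of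
   X = (X_1..X_n): joint law of (X, Z) on measurable rectangles is the
   product of the law of X and the n-fold product of N(0,1). *)
Definition indep_std_gaussian {d} {T : measurableType d} {R : realType}
  (P : probability T R) (n : nat) (X Z : 'I_n -> T -> R) : Prop :=
  forall (A B : 'I_n -> set R),
    (forall i, measurable (A i)) -> (forall i, measurable (B i)) ->
    P (\bigcap_(i in [set: 'I_n]) (X i @^-1` A i) `&`
       \bigcap_(i in [set: 'I_n]) (Z i @^-1` B i)) =
    (P (\bigcap_(i in [set: 'I_n]) (X i @^-1` A i)) *
     \prod_(i < n) normal_prob 0 1 (B i))%E.

(* Marginal at time t of the OU process dX_t = -X_t dt + sqrt 2 dB_t started
   at X_0 = X:  X_t = e^{-t} X + sqrt(1 - e^{-2t}) Z, Z ~ N(0,I) indep. of X. *)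
Definition ou_at {T : Type} {R : realType} (n : nat)
  (X Z : 'I_n -> T -> R) (t : R) : 'I_n -> T -> R :=
  fun i w => expR (- t) * X i w + Num.sqrt (1 - expR (- (2 * t))) * Z i w.

(* Main.v *)
Require Import Defs.
From HB Require Import structures.
From mathcomp Require Import all_boot all_order all_algebra.
From mathcomp Require Import all_classical all_reals all_analysis.
From mathcomp Require Import normal_distribution.
From mathcomp Require Import measurable_realfun.
From mathcomp Require Import ring lra.
Import Order.TTheory GRing.Theory Num.Theory.
Local Open Scope classical_set_scope.
Local Open Scope ring_scope.

Lemma pdf_mgf (R : realType) (x : R) :
  expR (x ^+ 2 / 3) * normal_pdf 0 1 x = Num.sqrt 3 * normal_pdf 0 (Num.sqrt 3) x.
Proof.
have s3 : 0 < Num.sqrt (3:R) by rewrite sqrtr_gt0.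
have sp : 0 < Num.sqrt (pi *+ 2 : R) by rewrite sqrtr_gt0 mulrn_wgt0 // pi_gt0.
rewrite /normal_pdf oner_eq0 (negbTE (lt0r_neq0 s3)) /normal_peak /normal_fun.
rewrite sqr_sqrtr ?ler0n // expr1n !subr0.
rewrite mulrCA -expRD mul1r -mulrnAr sqrtrM ?ler0n // invfM.
rewrite (_ : x ^+ 2 / 3 + - x ^+ 2 / 2 = - x ^+ 2 / (3 *+ 2)); last first.
  by rewrite -mulr_natr; field.
set E := expR _.
field; by rewrite (gt_eqF s3) (gt_eqF sp).
Qed.

Lemma gauss_int (d0 : measure_display) (T : measurableType d0) (R : realType)
  (P : probability T R) (Y : T -> R) :
  measurable_fun setT Y ->
  (forall B : set R, measurable B -> P (Y @^-1` B) = normal_prob 0 1 B) ->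
  (\int[P]_w (expR (Y w ^+ 2 / 3))%:E = (Num.sqrt 3)%:E)%E.
Proof.
move=> mY HY.
pose Y' : T -> measurableTypeR R := Y.
have mY' : measurable_fun setT Y' := mY.
pose h := fun x : R => (expR (x ^+ 2 / 3))%:E.
have mh0 : measurable_fun setT h.
  apply/measurable_EFinP; apply: measurableT_comp; first exact: measurable_expR.
  by apply: measurable_funM => //; exact: exprn_measurable.
pose h' : measurableTypeR R -> \bar R := h.
have mh : measurable_fun setT h' := mh0.
have h0 : forall x, (0 <= h' x)%E by move=> x; rewrite lee_fin expR_ge0.
have -> : (\int[P]_w (expR (Y w ^+ 2 / 3))%:E = \int[P]_(w in Y' @^-1` setT) (h' \o Y') w)%E.
  by rewrite preimage_setT.
rewrite -(@ge0_integral_pushforward _ _ _ _ _ Y' mY' P setT h' measurableT mh (fun y _ => h0 y)).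
have -> : (\int[pushforward P Y']_y h' y = \int[normal_prob 0 1]_y h' y)%E.
  by apply: eq_measure_integral => A mA _; rewrite /pushforward; exact: HY.
have dom := normal_prob_dominates (0:R) 1.
rewrite -(Radon_Nikodym_SigmaFinite.change_of_variables dom) //.
set RN := Radon_Nikodym_SigmaFinite.f _ _.
have iRN : lebesgue_measure.-integrable setT RN.
  exact: Radon_Nikodym_SigmaFinite.f_integrable.
have ae : ae_eq lebesgue_measure setT RN (fun x => (normal_pdf 0 1 x)%:E).
  apply: integral_ae_eq => //.
  - by apply/measurable_EFinP; exact: measurable_normal_pdf.
  - move=> E _ mE; rewrite -Radon_Nikodym_SigmaFinite.f_integral //.
have -> : (\int[lebesgue_measure]_x (h' x * RN x) =
          \int[lebesgue_measure]_x (h' x * (normal_pdf 0 1 x)%:E))%E.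
  apply: ae_eq_integral => //.
  - apply: emeasurable_funM => //; exact: measurable_int iRN.
  - apply: emeasurable_funM => //; apply/measurable_EFinP; exact: measurable_normal_pdf.
  - exact: ae_eqe_mul2l.
under eq_integral do rewrite /h' /h -EFinM pdf_mgf EFinM.
rewrite ge0_integralZl //; try by rewrite integral_normal_pdf mule1.
all: try by apply/measurable_EFinP; exact: measurable_normal_pdf.
all: try by move=> x _; rewrite lee_fin normal_pdf_ge0.
all: try by rewrite lee_fin sqrtr_ge0.
Qed.

Lemma expR_tangent (R : realType) (m c : R) : expR m * (1 + (c - m)) <= expR c.
Proof.
have -> : expR c = expR m * expR (c - m) by rewrite -expRD addrC subrK.
by rewrite ler_pM2l ?expR_gt0 // expR_ge1Dx.
Qed.

Lemma conv2_expR (R : realType) (l a b : R) : 0 <= l -> l <= 1 ->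
  expR (l * a + (1 - l) * b) <= l * expR a + (1 - l) * expR b.
Proof.
move=> l0 l1; set m := l * a + (1 - l) * b.
have ha := expR_tangent R m a; have hb := expR_tangent R m b.
have em := expR_gt0 m.
have h1 : l * (expR m * (1 + (a - m))) <= l * expR a by rewrite ler_wpM2l.
have h2 : (1 - l) * (expR m * (1 + (b - m))) <= (1 - l) * expR b.
  by rewrite ler_wpM2l // subr_ge0.
have -> : expR m = l * (expR m * (1 + (a - m))) + (1 - l) * (expR m * (1 + (b - m))).
  rewrite /m; ring.
exact: lerD.
Qed.

Lemma jensen_expR (R : realType) (n : nat) (w c : 'I_n -> R) :
  (forall i, 0 <= w i) -> \sum_(i < n) w i = 1 ->
  expR (\sum_(i < n) w i * c i) <= \sum_(i < n) w i * expR (c i).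
Proof.
move=> w0 w1; set m := \sum_(i < n) w i * c i.
apply: (@le_trans _ _ (\sum_(i < n) w i * (expR m * (1 + (c i - m))))); last first.
  by apply: ler_sum => i _; rewrite ler_wpM2l // expR_tangent.
rewrite le_eqVlt; apply/orP; left; apply/eqP.
under eq_bigr do rewrite mulrCA mulrDr mulr1 mulrBr mulrDr.
rewrite big_split /= -!mulr_sumr w1 mulr1 sumrB -mulr_suml w1 mul1r -/m subrr.
by rewrite mulr0 addr0.
Qed.

Lemma pointwise (R : realType) (d : nat) (a s t : R) (x z : 'I_d -> R) :
  (0 < d)%N -> s ^+ 2 <= 1 -> 0 < t ->
  0 <= 2 * a ^+ 2 * t ^+ 2 / (3 * d%:R) <= 1 ->
  expR (sqnorm (fun i => a * x i + s * z i) / (3 * Num.sqrt d%:R) ^+ 2)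
  <= (1 - 2 * a ^+ 2 * t ^+ 2 / (3 * d%:R)) / 3
     + (2 * a ^+ 2 * t ^+ 2 / (3 * d%:R)) / 3 * expR (sqnorm x / t ^+ 2)
     + \sum_(i < d) (2 / (3 * d%:R)) * expR (z i ^+ 2 / 3).
Proof.
move=> d0 s1 t0 /andP[mu0 mu1].
set mu := 2 * a ^+ 2 * t ^+ 2 / (3 * d%:R) in mu0 mu1 *.
have D0 : 0 < (d%:R : R) by rewrite ltr0n.
rewrite exprMn sqr_sqrtr ?ler0n //.
set U := sqnorm x; set V := sqnorm z.
have U0 : 0 <= U by apply: sumr_ge0 => i _; exact: sqr_ge0.
have V0 : 0 <= V by apply: sumr_ge0 => i _; exact: sqr_ge0.
have hA : sqnorm (fun i => a * x i + s * z i) <= 2 * a ^+ 2 * U + 2 * V.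
  rewrite /U /V /sqnorm !mulr_sumr -big_split /=; apply: ler_sum => i _.
  have := sqr_ge0 (z i); have := sqr_ge0 (a * x i - s * z i).
  move: (x i) (z i) => p q h1 h2.
  have h3 : s ^+ 2 * q ^+ 2 <= q ^+ 2 by rewrite ler_piMl // sqr_ge0.
  nra.
have hB : expR (sqnorm (fun i => a * x i + s * z i) / (3 ^+ 2 * d%:R))
   <= expR (1/3 * (2 * a ^+ 2 * U / (3 * d%:R)) + (1 - 1/3) * (V / (3 * d%:R))).
  rewrite ler_expR.
  have -> : 1/3 * (2 * a ^+ 2 * U / (3 * d%:R)) + (1 - 1/3) * (V / (3 * d%:R))
     = (2 * a ^+ 2 * U + 2 * V) / (3 ^+ 2 * d%:R).
    by field; rewrite gt_eqF.
  by rewrite ler_pM2r // invr_gt0 mulr_gt0 // exprn_gt0.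
have hC : expR (1/3 * (2 * a ^+ 2 * U / (3 * d%:R)) + (1 - 1/3) * (V / (3 * d%:R)))
   <= 1/3 * expR (2 * a ^+ 2 * U / (3 * d%:R)) + (1 - 1/3) * expR (V / (3 * d%:R)).
  by apply: conv2_expR; rewrite ?divr_ge0 ?ler_pdivrMr ?mul1r ?ler1n.
have hD : expR (2 * a ^+ 2 * U / (3 * d%:R)) <= mu * expR (U / t ^+ 2) + (1 - mu) * expR 0.
  have -> : 2 * a ^+ 2 * U / (3 * d%:R) = mu * (U / t ^+ 2) + (1 - mu) * 0.
    by rewrite /mu; field; rewrite !gt_eqF // exprn_gt0.
  exact: conv2_expR.
have hE : expR (V / (3 * d%:R)) <= \sum_(i < d) (d%:R)^-1 * expR (z i ^+ 2 / 3).
  have -> : V / (3 * d%:R) = \sum_(i < d) (d%:R)^-1 * (z i ^+ 2 / 3).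
    rewrite /V /sqnorm mulr_suml; apply: eq_bigr => i _.
    by field; rewrite gt_eqF.
  apply: jensen_expR => [i|]; first by rewrite invr_ge0 ler0n.
  by rewrite sumr_const card_ord -[LHS]mulr_natr mulVf // gt_eqF.
have -> : \sum_(i < d) 2 / (3 * d%:R) * expR (z i ^+ 2 / 3)
   = 2/3 * \sum_(i < d) (d%:R)^-1 * expR (z i ^+ 2 / 3).
  rewrite mulr_sumr; apply: eq_bigr => i _; field; by rewrite gt_eqF.
move: hA hB hC hD hE; rewrite expR0.
set S := \sum_(i < d) _; set G := expR (U / t ^+ 2).
set E1 := expR (_ / (3 ^+ 2 * d%:R)); set A := expR (2 * a ^+ 2 * U / _).
set B := expR (V / _) => _ hB hC hD hE.
lra.
Qed.

Lemma marginal (d0 : measure_display) (T : measurableType d0) (R : realType)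
  (P : probability T R) (d : nat) (X Z : 'I_d -> T -> R) :
  indep_std_gaussian P X Z ->
  forall i (B : set R), measurable B -> P (Z i @^-1` B) = normal_prob 0 1 B.
Proof.
move=> hind i B mB.
have := hind (fun _ => setT) (fun j => if j == i then B else setT).
rewrite /= => /(_ (fun _ => measurableT)).
have mB' : forall j : 'I_d, measurable (if j == i then B else setT).
  by move=> j; case: ifP.
move=> /(_ mB').
have -> : \bigcap_(j in [set: 'I_d]) (X j @^-1` setT) = setT.
  by apply/seteqP; split => // w _ j _.
rewrite setTI probability_setT mul1e.
have -> : \bigcap_(j in [set: 'I_d]) (Z j @^-1` (if j == i then B else setT)) = Z i @^-1` B.
  apply/seteqP; split => w /=.
  - by move=> /(_ i I); rewrite eqxx.
  - by move=> Bw j _; case: eqP => [->|].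
move=> ->.
rewrite (bigD1 i) //= eqxx big1 ?mule1 // => j /negbTE ->.
exact: probability_setT.
Qed.

Theorem lemma11 (d0 : measure_display) (T : measurableType d0) (R : realType)
  (P : probability T R) (d : nat) (X Z : 'I_d -> T -> R) (T1 : R) :
  (forall i, measurable_fun [set: T] (X i)) ->
  (forall i, measurable_fun [set: T] (Z i)) ->
  indep_std_gaussian P X Z ->
  (psi2 P X < +oo)%E ->
  0 <= T1 ->
  psi2 P X = 0%E \/ ln (fine (psi2 P X) / Num.sqrt d%:R) <= T1 ->
  (psi2 P (ou_at X Z T1) <= (3 * Num.sqrt d%:R)%:E)%E.
Proof.
move=> mX mZ hind Kfin T10 hK.
have marg := @marginal _ _ _ P _ X Z hind.
case: d X Z mX mZ hind Kfin hK marg => [|n] X Z mX mZ hind Kfin hK marg.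
  rewrite sqrtr0 mulr0; apply/lee_addgt0Pr => e e0; rewrite add0e.
  apply: ereal_inf_lbound; exists e => //; split => //.
  under eq_integral do rewrite /sqnorm big_ord0 mul0r expR0.
  by rewrite integral_cst // mul1e (le_trans (probability_le1 _ _)) // lee_fin ler1n.
set D : R := n.+1%:R.
have D0 : 0 < D by rewrite ltr0n.
have sD0 : 0 < Num.sqrt D by rewrite sqrtr_gt0.
set a := expR (- T1).
have a0 : 0 < a by exact: expR_gt0.
have a1 : a <= 1 by rewrite /a -expR0 ler_expR oppr_le0.
set s := Num.sqrt (1 - expR (- (2 * T1))).
have s1 : s ^+ 2 <= 1.
  have e1 : expR (- (2 * T1)) <= 1 by rewrite -expR0 ler_expR oppr_le0 mulr_ge0.
  by rewrite /s sqr_sqrtr ?subr_ge0 // lerBlDr lerDl expR_ge0.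
set K := psi2 P X.
have K0 : (0 <= K)%E.
  apply: le_ereal_inf_tmp => _ [t [t0 _] <-]; by rewrite lee_fin ltW.
have KE : K = (fine K)%:E by rewrite fineK // ge0_fin_numE.
set k := fine K in KE.
have k0 : 0 <= k by rewrite -lee_fin -KE.
have hka : k * a <= Num.sqrt D.
  have [->|kpos] := eqVneq k 0; first by rewrite mul0r ltW.
  have kpos' : 0 < k by rewrite lt0r kpos.
  case: hK => [hK|hK].
    by move: kpos; rewrite /k /K hK /= eqxx.
  rewrite -/k -/D in hK.
  have hq : 0 < k / Num.sqrt D by rewrite divr_gt0.
  have : k / Num.sqrt D <= expR T1.
    by rewrite -[X in X <= _](lnK hq) ler_expR.
  rewrite ler_pdivrMr // => hk.
  have : k * a <= expR T1 * Num.sqrt D * a by apply: ler_wpM2r => //; exact: ltW.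
  by rewrite mulrAC /a -expRD subrr expR0 mul1r.
set b := 6 / 5 * Num.sqrt D / a.
have Kb : (K < b%:E)%E.
  rewrite KE lte_fin /b ltr_pdivlMr // mulrC.
  rewrite mulrC; apply: (le_lt_trans hka); lra.
have [_ [t [t0 tint] <-] tb] := ereal_inf_lt Kb.
rewrite lte_fin in tb.
set mu := 2 * a ^+ 2 * t ^+ 2 / (3 * D).
have mu0 : 0 <= mu.
  apply: divr_ge0; first by apply: mulr_ge0; [apply: mulr_ge0 => //; exact: sqr_ge0 | exact: sqr_ge0].
  by apply: mulr_ge0 => //; exact: ltW.
have mu1 : mu <= 1.
  rewrite /mu ler_pdivrMr ?mulr_gt0 // mul1r.
  have hat : a * t < 6 / 5 * Num.sqrt D by rewrite -ltr_pdivlMl // mulrC.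
  have hat0 : 0 <= a * t by rewrite mulr_ge0 // ltW.
  have sq : Num.sqrt D ^+ 2 = D by rewrite sqr_sqrtr // ltW.
  have : (a * t) ^+ 2 <= (6 / 5 * Num.sqrt D) ^+ 2.
    by rewrite ler_sqr ?nnegrE // ltW // mulr_gt0.
  rewrite !exprMn sq => h. nra.
apply: ereal_inf_lbound; exists (3 * Num.sqrt D) => //; split.
  by rewrite mulr_gt0.
pose G := fun w => expR (sqnorm (fun i => X i w) / t ^+ 2).
pose H := fun i w => expR (Z i w ^+ 2 / 3).
have mXn : measurable_fun setT (fun w => sqnorm (fun i => X i w)).
  by apply: measurable_sum => i; apply: measurable_funX; exact: mX.
have mG : measurable_fun setT G.
  apply: measurableT_comp; first exact: measurable_expR.
  by apply: measurable_funM => //.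
have mH : forall i, measurable_fun setT (H i).
  move=> i; apply: measurableT_comp; first exact: measurable_expR.
  by apply: measurable_funM => //; apply: measurable_funX.
have mY : measurable_fun setT
    (fun w => expR (sqnorm (fun i => ou_at X Z T1 i w) / (3 * Num.sqrt D) ^+ 2)).
  apply: measurableT_comp; first exact: measurable_expR.
  apply: measurable_funM => //; apply: measurable_sum => i; apply: measurable_funX.
  by apply: measurable_funD; apply: measurable_funM => //.
pose c1 := (1 - mu) / 3; pose c2 := mu / 3; pose c3 := 2 / (3 * D).
have c10 : 0 <= c1 by rewrite /c1 divr_ge0 // subr_ge0.
have c20 : 0 <= c2 by rewrite /c2 divr_ge0.
have c30 : 0 <= c3 by rewrite /c3 divr_ge0 // mulr_ge0 // ltW.
have HH : (\int[P]_w (expR (sqnorm ((ou_at X Z T1)^~ w) / (3 * Num.sqrt D) ^+ 2))%:E <=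
   \int[P]_w ((c1 + c2 * G w + \sum_(i < n.+1) c3 * H i w)%R%:E))%E.
  apply: ge0_le_integral => //.
  - exact/measurable_EFinP.
  - apply/measurable_EFinP; apply: measurable_funD; first by apply: measurable_funD => //; apply: measurable_funM.
    by apply: measurable_sum => i; apply: measurable_funM => //.
  - move=> w _; rewrite lee_fin.
    exact: (@pointwise R n.+1 a s t (fun i => X i w) (fun i => Z i w) isT s1 t0 (introT andP (conj mu0 mu1))).
apply: (le_trans HH).
have hGH : forall w, (0 <= G w) /\ (forall i, 0 <= H i w).
  by move=> w; split => [|i]; rewrite expR_ge0.
under eq_integral do rewrite -addrA EFinD EFinD -sumEFin.
have mcG : measurable_fun setT (fun w => (c2 * G w)%:E).
  by apply/measurable_EFinP; apply: measurable_funM.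
have mcH : forall i, measurable_fun setT (fun w => (c3 * H i w)%:E).
  by move=> i; apply/measurable_EFinP; apply: measurable_funM.
have mS : measurable_fun setT (fun w => \sum_(i < n.+1) (c3 * H i w)%:E)%E.
  by apply: emeasurable_sum => i; exact: mcH.
have cG0 : forall w, (0 <= (c2 * G w)%:E)%E.
  by move=> w; rewrite lee_fin mulr_ge0 // (hGH w).1.
have cH0 : forall i w, (0 <= (c3 * H i w)%:E)%E.
  by move=> i w; rewrite lee_fin mulr_ge0 // (hGH w).2.
have S0 : forall w, (0 <= \sum_(i < n.+1) (c3 * H i w)%:E)%E.
  by move=> w; apply: sume_ge0 => i _; exact: cH0.
rewrite ge0_integralD //; try (by move=> w _; rewrite adde_ge0); try (exact: emeasurable_funD).
rewrite ge0_integralD //; try (by move=> w _); try (exact: mS); try (by move=> w _; rewrite lee_fin).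
have hHi : forall i, (\int[P]_w (c3 * H i w)%:E = (c3 * Num.sqrt 3)%:E)%E.
  move=> i; under eq_integral do rewrite EFinM.
  rewrite ge0_integralZl //; try (by apply/measurable_EFinP; exact: mH);
    try (by move=> w _; rewrite lee_fin (hGH w).2); try (by rewrite lee_fin).
  by rewrite (@gauss_int _ _ _ P (Z i) (mZ i) (marg i)) EFinM.
rewrite ge0_integral_sum //; try (by move=> i w _; exact: cH0).
rewrite (eq_bigr _ (fun i _ => hHi i)) sumEFin sumr_const card_ord.
have -> : (\int[P]_x (c2 * G x)%:E = c2%:E * \int[P]_x (G x)%:E)%E.
  under eq_integral do rewrite EFinM.
  rewrite ge0_integralZl //; try (by apply/measurable_EFinP; exact: mG);
    try (by move=> w _; rewrite lee_fin (hGH w).1); try (by rewrite lee_fin).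
have -> : (\int[P]__ c1%:E = c1%:E * P setT)%E by exact: integral_cst.
have h1 : (c1%:E * P setT <= c1%:E)%E.
  rewrite -[leRHS]mule1; apply: lee_wpmul2l; first by rewrite lee_fin.
  exact: probability_le1.
have h2 : (c2%:E * \int[P]_x (G x)%:E <= c2%:E * 2%:E)%E.
  apply: lee_wpmul2l; first by rewrite lee_fin.
  exact: tint.
apply: (le_trans (leeD h1 (leeD h2 (lexx _)))).
rewrite -EFinM -!EFinD lee_fin.
have s3 : Num.sqrt 3 <= 2 :> R.
  rewrite -(@ler_pXn2r _ 2) ?nnegrE ?sqrtr_ge0 // sqr_sqrtr //; lra.
rewrite /c1 /c2 /c3 -[_ *+ n.+1]mulr_natr -/D.
have -> : 2 / (3 * D) * Num.sqrt 3 * D = 2 / 3 * Num.sqrt 3.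
  by field; rewrite gt_eqF.
lra.
Qed.
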